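(* Let $\otimes$ and $\oplus$ be uninorms on $[0,1]$. If $\otimes$ satisfies property $A$ and $\oplus$ satisfies property $B'$, then $(\otimes,\oplus)$ satisfies the dual rearrangement inequality.
   Context: A uninorm is a function $\otimes:[0,1]^2\to[0,1]$ that is commutative, associative, monotonic ($x\leq y$ implies $x\otimes z\leq y\otimes z$), and has an identity element $e\in[0,1]$. A function $f$ satisfies property $A$ if for all $0\leq x\leq y\leq z\leq w\leq 1$, $w+x\leq y+z$ implies $f(x,w)\leq f(y,z)$; property $B'$ if for all $0\leq x\leq y\leq1$ and $0\leq z\leq w\leq1$, $f(x,w)-f(x,z)\geq f(y,w)-f(y,z)$. The pair $(\otimes,\oplus)$ satisfies the dual rearrangement inequality if for every $n\geq1$, all $0\leq x_1\leq\cdots\leq x_n\leq 1$, $0\leq y_1\leq\cdots\leq y_n\leq 1$ and every permutation $\sigma$ of $\{1,\dots,n\}$, $$(x_n\oplus y_1)\otimes\cdots\otimes(x_1\oplus y_n)\geq (x_{\sigma(1)}\oplus y_1)\otimes\cdots\otimes(x_{\sigma(n)}\oplus y_n)\geq (x_1\oplus y_1)\otimes\cdots\otimes(x_n\oplus y_n).$$ *)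

(* Defs.v *)
From HB Require Import structures.
From mathcomp Require Import all_boot all_order all_algebra all_fingroup.
From mathcomp Require Import reals.
Set Implicit Arguments. Unset Strict Implicit. Unset Printing Implicit Defensive.
Import Order.TTheory GRing.Theory Num.Theory.
Local Open Scope ring_scope.

Definition unit01 {R : realType} (x : R) : Prop := 0 <= x /\ x <= 1.

(* A binary operation on [0,1], represented as f : R -> R -> R that maps
   [0,1]^2 into [0,1]; all axioms are required only on [0,1]. *)
Definition uninorm {R : realType} (f : R -> R -> R) (e : R) : Prop :=
  unit01 e /\ [/\
      (forall x y, unit01 x -> unit01 y -> unit01 (f x y)),
      (forall x y, unit01 x -> unit01 y -> f x y = f y x),
      (forall x y z, unit01 x -> unit01 y -> unit01 z ->
                      f x (f y z) = f (f x y) z),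
      (forall x y z, unit01 x -> unit01 y -> unit01 z ->
                      x <= y -> f x z <= f y z) &
      (forall x, unit01 x -> f x e = x)].

Definition is_uninorm {R : realType} (f : R -> R -> R) : Prop :=
  exists e : R, uninorm f e.

Definition property_A {R : realType} (f : R -> R -> R) : Prop :=
  forall x y z w : R, 0 <= x -> x <= y -> y <= z -> z <= w -> w <= 1 ->
    w + x <= y + z -> f x w <= f y z.

Definition property_B' {R : realType} (f : R -> R -> R) : Prop :=
  forall x y z w : R, 0 <= x -> x <= y -> y <= 1 -> 0 <= z -> z <= w -> w <= 1 ->
    f x w - f x z >= f y w - f y z.

(* The n-fold product a_1 (x) ... (x) a_n, bracketed as
   a_1 (x) (a_2 (x) ( ... (a_n (x) e))) where e is the identity of (x);
   by associativity and the identity law the bracketing is immaterial. *)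
Definition uprod {R : realType} (f : R -> R -> R) (e : R) (n : nat)
    (a : 'I_n -> R) : R :=
  \big[f/e]_(i < n) a i.

(* Dual rearrangement inequality for the pair (otimes, oplus), where eo is
   the identity element of otimes.  Indices 1..n of the paper are 'I_n. *)
Definition dual_rearrangement {R : realType} (otimes oplus : R -> R -> R)
    (eo : R) : Prop :=
  forall (n : nat), (0 < n)%N ->
  forall (x y : 'I_n -> R),
    (forall i, unit01 (x i)) -> (forall i, unit01 (y i)) ->
    (forall i j : 'I_n, (i <= j)%N -> x i <= x j) ->
    (forall i j : 'I_n, (i <= j)%N -> y i <= y j) ->
    forall s : 'S_n,
      uprod otimes eo (fun i => oplus (x (rev_ord i)) (y i))
        >= uprod otimes eo (fun i => oplus (x (s i)) (y i))
      /\ uprod otimes eo (fun i => oplus (x (s i)) (y i))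
        >= uprod otimes eo (fun i => oplus (x i) (y i)).

(* Main.v *)
Require Import Defs.
From HB Require Import structures.
From mathcomp Require Import all_boot all_order all_algebra all_fingroup.
From mathcomp Require Import reals lra zify.
Set Implicit Arguments. Unset Strict Implicit. Unset Printing Implicit Defensive.
Import Order.TTheory GRing.Theory Num.Theory.
Local Open Scope ring_scope.


Lemma phi_dec n (h : 'I_n -> nat) (i j : 'I_n) : (i < j)%N -> (h i < h j)%N ->
  (\sum_(k < n) k * h (tperm i j k) < \sum_(k < n) k * h k)%N.
Proof.
move=> ij hij.
have nij : i != j by apply: contraTneq ij => ->; rewrite ltnn.
have sp (G : 'I_n -> nat) : (\sum_(k < n) G k = G i + (G j + \sum_(k < n | (k != i) && (k != j)) G k))%N.
  by rewrite (bigD1 i) //; congr addn; rewrite (bigD1 j) 1?eq_sym.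
rewrite !sp tpermL tpermR.
rewrite (eq_bigr (fun k : 'I_n => k * h k)%N); last first.
  by move=> k /andP[ki kj]; rewrite tpermD // eq_sym.
rewrite !addnA ltn_add2r.
move: ij hij; move: (nat_of_ord i) (nat_of_ord j) (h i) (h j) => a b c d ab cd.
have [u ->] : exists u, (b = a + u.+1)%N by exists (b - a.+1)%N; lia.
have [v ->] : exists v, (d = c + v.+1)%N by exists (d - c.+1)%N; lia.
rewrite !mulnDr !mulnDl; lia.
Qed.

Lemma incr_id n (h : 'I_n -> 'I_n) : (forall i j : 'I_n, (i < j)%N -> (h i < h j)%N) ->
  forall k, h k = k.
Proof.
move=> H.
have lo : forall m (k : 'I_n), nat_of_ord k = m -> (m <= h k)%N.
  elim=> [//|m IH] k hk.
  have mn : (m < n)%N by have := ltn_ord k; lia.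
  have := IH (Ordinal mn) erefl; have := H (Ordinal mn) k; rewrite /= hk ltnSn => /(_ isT); lia.
have hi : forall m (k : 'I_n), (n - k.+1 = m)%N -> (h k + m < n)%N.
  elim=> [|m IH] k hk; first by rewrite addn0.
  have mn : (k.+1 < n)%N by lia.
  have hk' : (n - (Ordinal mn).+1 = m)%N by rewrite /=; lia.
  have := IH (Ordinal mn) hk'; have := H k (Ordinal mn) (ltnSn _); lia.
move=> k; apply: val_inj => /=; have := lo _ k erefl; have := hi _ k erefl; lia.
Qed.

Section S.
Variables (R : realType) (f g : R -> R -> R) (e es : R).
Hypotheses (Hf : uninorm f e) (Hg : uninorm g es) (HA : property_A f) (HB' : property_B' g).

Definition U := {x : R | (0 <= x) && (x <= 1)}.
Lemma u01 (u : U) : unit01 (val u).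
Proof. by case: u => /= x /andP. Qed.
Lemma tob (x : R) : unit01 x -> (0 <= x) && (x <= 1).
Proof. by case=> -> ->. Qed.
Definition mk (x : R) (h : unit01 x) : U := exist _ x (tob h).
Lemma fclos x y : unit01 x -> unit01 y -> unit01 (f x y).
Proof. by have [_ [c _ _ _ _]] := Hf; apply: c. Qed.
Lemma gclos x y : unit01 x -> unit01 y -> unit01 (g x y).
Proof. by have [_ [c _ _ _ _]] := Hg; apply: c. Qed.
Lemma e01 : unit01 e. Proof. by case: Hf. Qed.
Definition F (u v : U) : U := mk (fclos (u01 u) (u01 v)).
Definition E : U := mk e01.
Lemma FA : associative F.
Proof. have [_ [c _ a _ _]] := Hf. move=> u v w; apply: val_inj => /=. by rewrite a //; apply: u01. Qed.
Lemma FC : commutative F.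
Proof. have [_ [c cc a _ _]] := Hf. move=> u v; apply: val_inj => /=. by rewrite cc //; apply: u01. Qed.
Lemma F1 : left_id E F.
Proof. have [h [c cc a _ i]] := Hf. move=> u; apply: val_inj => /=. by rewrite cc ?i //; apply: u01. Qed.
HB.instance Definition _ := Monoid.isComLaw.Build U E F FA FC F1.

Lemma bigval n (a : 'I_n -> U) : \big[f/e]_(i < n) val (a i) = val (\big[F/E]_(i < n) a i).
Proof. by apply: (big_ind2 (fun u v => u = val v)) => // ? ? ? ? -> ->. Qed.


Lemma fmono u v w : val u <= val v -> val (F u w) <= val (F v w).
Proof. have [_ [_ _ _ m _]] := Hf. by move=> h; apply: m => //; apply: u01. Qed.

Lemma gm1 a b c : unit01 a -> unit01 b -> unit01 c -> a <= b -> g a c <= g b c.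
Proof. have [_ [_ _ _ m _]] := Hg. exact: m. Qed.
Lemma gm2 a b c : unit01 a -> unit01 b -> unit01 c -> b <= c -> g a b <= g a c.
Proof. have [_ [_ cc _ m _]] := Hg. by move=> *; rewrite (cc a) // (cc a) //; apply: m. Qed.

Lemma two a b c d : unit01 a -> unit01 b -> unit01 c -> unit01 d ->
  a <= b -> c <= d -> f (g a c) (g b d) <= f (g b c) (g a d).
Proof.
move=> ha hb hc hd ab cd.
have up : g a c <= g b c by apply: gm1.
have pv : g b c <= g b d by apply: gm2.
have uq : g a c <= g a d by apply: gm2.
have qv : g a d <= g b d by apply: gm1.
have hB := HB' (proj1 ha) ab (proj2 hb) (proj1 hc) cd (proj2 hd).
have hs : g b d + g a c <= g b c + g a d by move: hB; lra.
have [ha1 hb1] := (gclos ha hc, gclos hb hd).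
have [hc1 hd1] := (gclos hb hc, gclos ha hd).
have [pq|qp] := leP (g b c) (g a d).
  exact: (HA (proj1 ha1) up pq qv (proj2 hb1) hs).
have [_ [_ cc _ _ _]] := Hf.
rewrite [X in _ <= X]cc //; apply: (HA (proj1 ha1) uq (ltW qp) pv (proj2 hb1)).
by move: hs; lra.
Qed.

Section N.
Variables (n : nat) (x y : 'I_n -> R) (hx : forall i, unit01 (x i)) (hy : forall i, unit01 (y i)).
Hypotheses (mx : forall i j : 'I_n, (i <= j)%N -> x i <= x j) (my : forall i j : 'I_n, (i <= j)%N -> y i <= y j).
Definition Xt k i : U := mk (gclos (hx k) (hy i)).
Definition Q (p : 'I_n -> 'I_n) := \big[F/E]_(i < n) Xt (p i) i.

Lemma split2 (i j : 'I_n) (G : 'I_n -> U) : i != j ->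
  \big[F/E]_k G k = F (G i) (F (G j) (\big[F/E]_(k | (k != i) && (k != j)) G k)).
Proof.
move=> nij; rewrite (bigD1 i) //; congr F; rewrite (bigD1 j) 1?eq_sym //; congr F.
Qed.

Lemma swapQ (p p' : 'I_n -> 'I_n) (i j : 'I_n) : (i < j)%N ->
  p' i = p j -> p' j = p i -> (forall k, k != i -> k != j -> p' k = p k) ->
  x (p i) <= x (p j) -> val (Q p) <= val (Q p').
Proof.
move=> ij e1 e2 e3 xij.
have nij : i != j by apply: contraTneq ij => ->; rewrite ltnn.
rewrite /Q !(split2 _ nij).
rewrite (eq_bigr (fun k => Xt (p' k) k)); last first.
  by move=> k /andP[ki kj]; rewrite e3.
rewrite e1 e2 !FA; apply: fmono => /=.
apply: two => //; apply: my; exact: ltnW.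
Qed.

Lemma upperQ (s : 'S_n) : val (Q s) <= val (Q (@rev_ord n)).
Proof.
suff H : forall m (s : 'S_n), (\sum_(k < n) k * s k < m)%N -> val (Q s) <= val (Q (@rev_ord n)).
  exact: (H _ s (ltnSn _)).
elim=> [//|m IH] {}s hm.
case: (pickP [pred q : 'I_n * 'I_n | (q.1 < q.2)%N && (s q.1 < s q.2)%N]) => [[i j] /andP[/= ij sij] | none].
  have hm' : (\sum_(k < n) k * (tperm i j * s)%g k < m)%N.
    rewrite -ltnS; apply: leq_trans hm; rewrite ltnS.
    under eq_bigr do rewrite permM.
    exact: (@phi_dec n (fun k => nat_of_ord (s k)) i j ij sij).
  apply: (le_trans _ (IH (tperm i j * s)%g hm')).
    apply: (swapQ (p := s) (p' := (tperm i j * s)%g) ij); rewrite ?permM ?tpermL ?tpermR //.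
      by move=> k ki kj; rewrite permM tpermD // eq_sym.
    by apply: mx; apply: ltnW.
have inc : forall a b : 'I_n, (a < b)%N -> (rev_ord (s a) < rev_ord (s b))%N.
  move=> a b ab; have := none (a, b); rewrite /= ab /= => /negbT.
  rewrite -leqNgt leq_eqVlt => /orP[/eqP/val_inj/perm_inj ba|].
    by move: ab; rewrite ba ltnn.
  move=> lt; rewrite /=; have := ltn_ord (s a); have := ltn_ord (s b); lia.
have hs : forall k, s k = rev_ord k.
  by move=> k; rewrite -[in RHS](incr_id inc k) rev_ordK.
suff -> : Q s = Q (@rev_ord n) by [].
by apply: eq_bigr => k _; rewrite hs.
Qed.

Lemma lowerQ (s : 'S_n) : val (Q id) <= val (Q s).
Proof.
suff H : forall m (s : 'S_n), (\sum_(k < n) k * (n - s k) < m)%N -> val (Q id) <= val (Q s).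
  exact: (H _ s (ltnSn _)).
elim=> [//|m IH] {}s hm.
case: (pickP [pred q : 'I_n * 'I_n | (q.1 < q.2)%N && (s q.2 < s q.1)%N]) => [[i j] /andP[/= ij sij] | none].
  have hm' : (\sum_(k < n) k * (n - (tperm i j * s)%g k) < m)%N.
    rewrite -ltnS; apply: leq_trans hm; rewrite ltnS.
    under eq_bigr do rewrite permM.
    apply: (@phi_dec n (fun k => (n - nat_of_ord (s k))%N) i j ij).
    have := ltn_ord (s i); lia.
  apply: (le_trans (IH (tperm i j * s)%g hm')).
    apply: (swapQ (p := (tperm i j * s)%g) (p' := s) ij); rewrite ?permM ?tpermL ?tpermR //.
      by move=> k ki kj; rewrite permM tpermD // eq_sym.
    by apply: mx; apply: ltnW.
have hs : forall k, s k = k.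
  apply: incr_id => a b ab; have := none (a, b); rewrite /= ab /= => /negbT.
  rewrite -leqNgt leq_eqVlt => /orP[/eqP/val_inj/perm_inj ba|//].
  by move: ab; rewrite ba ltnn.
suff -> : Q s = Q id by [].
by apply: eq_bigr => k _; rewrite hs.
Qed.
End N.
End S.

Theorem theorem7 (R : realType) (otimes oplus : R -> R -> R) (et es : R) :
  uninorm otimes et -> uninorm oplus es ->
  property_A otimes -> property_B' oplus ->
  dual_rearrangement otimes oplus et.
Proof.
move=> Hf Hg HA HB n _ x y hx hy mx my s.
have eq (p : 'I_n -> 'I_n) : uprod otimes et (fun i => oplus (x (p i)) (y i))
   = val (Q Hf Hg hx hy p).
  exact: (bigval Hf (fun i => Xt Hg hx hy (p i) i)).
rewrite (eq (@rev_ord n)) (eq s) (eq id).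
split; [exact: upperQ | exact: lowerQ].
Qed.
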